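(* Let $\sigma : X^* \to M$ be a monoid choice of generators for a right cancellative monoid $M$. Then the loop problem $L_\sigma(M)$ is deletion-closed: whenever $x, y, w \in \hat{X}^*$ satisfy $w \in L_\sigma(M)$ and $xwy \in L_\sigma(M)$, we have $xy \in L_\sigma(M)$.
   Context: Maps are written on the right. $X^*$ is the free monoid on $X$; a choice of generators is a surjective monoid morphism. Let $\overline{X} = \{\overline{x} : x \in X\}$ be new symbols, $\hat{X} = X \cup \overline{X}$. The loop automaton of $M$ w.r.t. $\sigma$ has vertex set $M$, for each $a \in M$, $x \in X$ an edge $a \to a(x\sigma)$ labelled $x$ and an edge $a(x\sigma) \to a$ labelled $\overline{x}$; the loop problem $L_\sigma(M) \subseteq \hat{X}^*$ is the set of labels of paths from the identity to the identity. *)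

(* Defs.v *)
From mathcomp Require Import all_boot.
Set Implicit Arguments. Unset Strict Implicit. Unset Printing Implicit Defensive.

Definition is_monoid (M : Type) (mul : M -> M -> M) (one : M) : Prop :=
  [/\ forall a b c, mul a (mul b c) = mul (mul a b) c,
      forall a, mul one a = a & forall a, mul a one = a].

Definition right_cancellative (M : Type) (mul : M -> M -> M) : Prop :=
  forall a b c, mul b a = mul c a -> b = c.

Definition choice_of_generators (X M : Type) (mul : M -> M -> M) (one : M)
  (sigma : seq X -> M) : Prop :=
  [/\ sigma [::] = one,
      forall u v, sigma (u ++ v) = mul (sigma u) (sigma v)
    & forall m, exists w, sigma w = m].

(* hat X = X ∪ X̄ : inl x is the letter x, inr x is the letter x̄. *)
Definition hat (X : Type) : Type := (X + X)%type.

Definition loop_edge (X M : Type) (mul : M -> M -> M) (sigma : seq X -> M)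
  (a : M) (l : hat X) (b : M) : Prop :=
  match l with
  | inl x => b = mul a (sigma [:: x])
  | inr x => a = mul b (sigma [:: x])
  end.

Inductive loop_path (X M : Type) (mul : M -> M -> M) (sigma : seq X -> M)
  : M -> seq (hat X) -> M -> Prop :=
| loop_path_nil a : loop_path mul sigma a [::] a
| loop_path_cons a l b w c :
    loop_edge mul sigma a l b -> loop_path mul sigma b w c ->
    loop_path mul sigma a (l :: w) c.

Definition loop_problem (X M : Type) (mul : M -> M -> M) (one : M)
  (sigma : seq X -> M) : seq (hat X) -> Prop :=
  fun w => loop_path mul sigma one w one.

(* Main.v *)
Require Import Defs.
From mathcomp Require Import all_boot.

Lemma lp_cat (X M : Type) (mul : M -> M -> M) (sigma : seq X -> M) a u v c :
  loop_path mul sigma a (u ++ v) c <->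
  exists b, loop_path mul sigma a u b /\ loop_path mul sigma b v c.
Proof.
split.
- elim: u a => [|l u IH] a /=.
  + move=> H; exists a; split => //; constructor.
  + move=> H; inversion H as [|a0 l0 b1 w0 c0 He Hp]; subst.
    have [b' [H1 H2]] := IH _ Hp.
    exists b'; split => //; econstructor; eauto.
- move=> [b [H1 H2]]; elim: H1 H2 => //= {}a l b0 w c0 He _ IH H2.
  econstructor; eauto.
Qed.

Lemma lp_lmul (X M : Type) (mul : M -> M -> M) (one : M) (sigma : seq X -> M) :
  is_monoid mul one -> forall a b w c,
  loop_path mul sigma b w c -> loop_path mul sigma (mul a b) w (mul a c).
Proof.
move=> [assoc _ _] a b w c H; elim: H => {b w c} [b|b l b' w c He _ IH].
- constructor.
- econstructor; last exact IH.
  case: l He => x /= ->; by rewrite assoc.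
Qed.

Lemma lp_det (X M : Type) (mul : M -> M -> M) (sigma : seq X -> M) :
  right_cancellative mul -> forall a w c c',
  loop_path mul sigma a w c -> loop_path mul sigma a w c' -> c = c'.
Proof.
move=> rc a w c c' H; elim: H c' => {a w c} [a|a l b w c He _ IH] c' H'.
- by inversion H'.
- inversion H' as [|a0 l0 b0 w0 c0 He' Hp']; subst. apply: IH.
  have -> : b = b0 => //.
  case: l He He' {H' Hp'} => x /= -> E.
  + by rewrite E.
  + exact: (rc _ _ _ E).
Qed.

Theorem proposition7p4 (X M : Type) (mul : M -> M -> M) (one : M)
  (sigma : seq X -> M) :
  is_monoid mul one ->
  right_cancellative mul ->
  choice_of_generators mul one sigma ->
  forall x y w : seq (hat X),
    loop_problem mul one sigma w ->
    loop_problem mul one sigma (x ++ w ++ y) ->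
    loop_problem mul one sigma (x ++ y).
Proof.
move=> mon rc _ x y w Hw Hxwy.
rewrite /loop_problem in Hw Hxwy *.
have [a [Hx Hwy]] := (proj1 (lp_cat _ _ _ _ _ _ _ _) Hxwy).
have [c [Hw' Hy]] := (proj1 (lp_cat _ _ _ _ _ _ _ _) Hwy).
have Ha := @lp_lmul _ _ _ _ _ mon a _ _ _ Hw.
have [_ _ r1] := mon; rewrite r1 in Ha.
have Ec := @lp_det _ _ _ _ rc _ _ _ _ Ha Hw'; subst c.
apply/lp_cat; exists a; split => //.
Qed.
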